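(* Let $\mathbb{A}$ and $\mathbb{B}$ be $\sigma$-structures. Then $\mathbb{A}\succeq\mathbb{B}$ (i.e. $\mathrm{opt}(\mathbb{A},\mathbb{C})\ge\mathrm{opt}(\mathbb{B},\mathbb{C})$ for every $\sigma$-structure $\mathbb{C}$) if and only if there is an overcast from $\mathbb{A}$ to $\mathbb{B}$.
   Context: A signature $\sigma$ is a finite set of symbols $f$ with arities $\mathrm{ar}(f)$; a $\sigma$-structure $\mathbb{A}$ is a finite domain $A$ with functions $f^{\mathbb{A}}\colon A^{\mathrm{ar}(f)}\to\mathbb{Q}_{\ge0}$. $\mathrm{tup}(\mathbb{A})$ is the set of pairs $(f,\bar x)$, $f\in\sigma$, $\bar x\in A^{\mathrm{ar}(f)}$. For a map $h\colon A\to C$, $\mathrm{val}(h)=\sum_{(f,\bar x)\in\mathrm{tup}(\mathbb{A})}f^{\mathbb{A}}(\bar x)f^{\mathbb{C}}(h(\bar x))$ and $\mathrm{opt}(\mathbb{A},\mathbb{C})=\max_h\mathrm{val}(h)$ over all maps $A\to C$. An overcast from $\mathbb{A}$ to $\mathbb{B}$ is a probability distribution $\omega$ (with rational probabilities) over the set $B^A$ of all maps $A\to B$ such that for every $(f,\bar x)\in\mathrm{tup}(\mathbb{B})$, $\mathbb{E}_{g\sim\omega}f^{\mathbb{A}}(g^{-1}(\bar x))\ge f^{\mathbb{B}}(\bar x)$, where $f^{\mathbb{A}}(g^{-1}(\bar x))$ denotes the sum of $f^{\mathbb{A}}(\bar y)$ over all $\bar y\in A^{\mathrm{ar}(f)}$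 with $g(\bar y)=\bar x$. *)

(* Defs.v *)
From HB Require Import structures.
From mathcomp Require Import all_boot all_order all_algebra.
Set Implicit Arguments. Unset Strict Implicit. Unset Printing Implicit Defensive.
Import Order.TTheory GRing.Theory Num.Theory.
Local Open Scope ring_scope.

Record signature := Signature { sym : finType; ar : sym -> nat }.

Unset Implicit Arguments.
Record structure (s : signature) := Structure {
  dom : finType;
  dom_nonempty : (0 < #|dom|)%N;
  interp : forall f : sym s, (ar f).-tuple dom -> rat;
  interp_ge0 : forall (f : sym s) (x : (ar f).-tuple dom), 0 <= interp f x }.

Set Implicit Arguments.
Arguments dom {s}.
Arguments interp {s}.

Definition val (s : signature) (A C : structure s) (h : {ffun dom A -> dom C}) : rat :=
  \sum_(f : sym s) \sum_(x : (ar f).-tuple (dom A))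
     interp A f x * interp C f (map_tuple h x).

(* opt(A,C) = max over all maps h : A -> C of val(h)
   (the set of maps is nonempty since domains are nonempty; val >= 0). *)
Definition opt (s : signature) (A C : structure s) : rat :=
  \big[Num.max/0]_(h : {ffun dom A -> dom C}) val h.

Definition succeq (s : signature) (A B : structure s) : Prop :=
  forall C : structure s, opt B C <= opt A C.

Definition preim_weight (s : signature) (A B : structure s)
    (g : {ffun dom A -> dom B}) (f : sym s) (x : (ar f).-tuple (dom B)) : rat :=
  \sum_(y : (ar f).-tuple (dom A) | map_tuple g y == x) interp A f y.

Definition overcast (s : signature) (A B : structure s)
    (w : {ffun {ffun dom A -> dom B} -> rat}) : Prop :=
  [/\ forall g, 0 <= w g,
      \sum_g w g = 1 &
      forall (f : sym s) (x : (ar f).-tuple (dom B)),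
        interp B f x <= \sum_g w g * preim_weight g x].

(* Main.v *)
Require Import Defs.
From mathcomp Require Import all_boot all_order all_algebra.
From mathcomp Require Import ring lra.
Import Order.TTheory GRing.Theory Num.Theory.
Local Open Scope ring_scope.


Lemma choose_t (J : finType) (r sv : J -> rat) :
  (forall j, 0 <= r j -> sv j < 0) ->
  (forall i j, 0 < r i -> r j < 0 -> - r j * sv i + r i * sv j < 0) ->
  exists t, 0 <= t /\ forall k, t * r k + sv k < 0.
Proof.
move=> H1 H2.
pose lo := \big[Num.max/0]_(j | r j < 0) (sv j / - r j).
pose hi := \big[Num.min/(lo+1)]_(i | 0 < r i) (- sv i / r i).
have lo0 : 0 <= lo.
  rewrite /lo; elim/big_rec: _ => // j x _ hx; by rewrite le_max hx orbT.
have loj : forall j, r j < 0 -> sv j / - r j <= lo.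
  move=> j hj; rewrite /lo (bigD1 j) //=; by rewrite le_max lexx.
have hii : forall i, 0 < r i -> hi <= - sv i / r i.
  move=> i hi'; rewrite /hi (bigD1 i) //=; by rewrite ge_min lexx.
have lohi : lo < hi.
  apply: (big_ind (fun x => lo < x)); first by lra.
    by move=> x y hx hy; rewrite lt_min hx hy.
  move=> i hi'.
  apply: (big_ind (fun x => x < - sv i / r i)).
  - by rewrite ltr_pdivlMr // mul0r; have := H1 i (ltW hi'); lra.
  - by move=> x y hx hy; rewrite gt_max hx hy.
  move=> j hj.
  have hj' : 0 < - r j by lra.
  rewrite ltr_pdivrMr // mulrAC ltr_pdivlMr //.
  rewrite -subr_lt0.
  have -> : sv j * r i - - sv i * - r j = - r j * sv i + r i * sv j by ring.
  exact: H2.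
exists ((lo + hi) / 2); split; first by lra.
move=> k.
set t := (lo + hi) / 2.
have tlo : 0 < t - lo by rewrite /t; lra.
have thi : 0 < hi - t by rewrite /t; lra.
case: (ltgtP (r k) 0) => hk.
- have hk' : 0 < - r k by lra.
  have := loj k hk; rewrite ler_pdivrMr // => h.
  have := mulr_gt0 tlo hk'.
  have -> : (t - lo) * - r k = - (t * r k) + lo * r k by ring.
  move: h; clear; lra.
- have := hii k hk; rewrite ler_pdivlMr // => h.
  have := mulr_gt0 thi hk.
  have -> : (hi - t) * r k = hi * r k - t * r k by ring.
  move: h; clear; lra.
- by rewrite hk mulr0 add0r; apply: H1; rewrite hk.
Qed.

Lemma sum_delta (J : finType) (q : J -> rat) (c : rat) (j : J) :
  \sum_k q k * (c * (k == j)%:R) = c * q j.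
Proof.
rewrite (bigD1 j) //= eqxx mulr1 big1 ?addr0 ?[_ * c]mulrC // => k /negbTE ->.
by rewrite mulr0 mulr0.
Qed.

Lemma ville (I : finType) (s : seq I) : uniq s -> forall (J : finType) (M : I -> J -> rat),
  (exists y : J -> rat, [/\ forall j, 0 <= y j, 0 < \sum_j y j &
       forall i, i \in s -> 0 <= \sum_j M i j * y j])
  \/ (exists z : I -> rat, (forall i, 0 <= z i) /\
       forall j, \sum_(i <- s) z i * M i j < 0).
Proof.
elim: s => [|a s IH] us J M.
  case: (pickP (@predT J)) => [j0 _ | hJ].
    left; exists (fun j => (j == j0)%:R); split => //.
    - rewrite (bigD1 j0) //= eqxx big1 ?addr0 ?ltr01 // => k /negbTE ->.
      done.
  right; exists (fun _ => 0); split => // j.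
  by have := hJ j.
move: us => /= /andP [anots us].
pose r := M a.
pose J' := ({j : J | 0 <= r j} + {p : J * J | (0 < r p.1) && (r p.2 < 0)})%type.
pose gen (c : J') : J -> rat :=
  match c with
  | inl j => fun k => 1 * (k == val j)%:R
  | inr p => fun k => - r (val p).2 * (k == (val p).1)%:R + r (val p).1 * (k == (val p).2)%:R
  end.
have genE : forall (q : J -> rat) c, \sum_k q k * gen c k =
  match c with
  | inl j => q (val j)
  | inr p => - r (val p).2 * q (val p).1 + r (val p).1 * q (val p).2
  end.
  move=> q [j|p] /=; first by rewrite sum_delta mul1r.
  under eq_bigr do rewrite mulrDr.
  by rewrite big_split /= !sum_delta.
have gen0 : forall c k, 0 <= gen c k.
  move=> [j|p] k /=; first by rewrite mul1r ler0n.
  case/andP: (valP p) => h1 h2.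
  apply: addr_ge0; apply: mulr_ge0; rewrite ?ler0n //; lra.
have genpos : forall c, 0 < \sum_k gen c k.
  move=> c; have := genE (fun _ => 1) c.
  under eq_bigr do rewrite mul1r.
  move=> ->; case: c => [j|p] //.
  case/andP: (valP p) => h1 h2; lra.
pose M' (i : I) (c : J') := \sum_k M i k * gen c k.
have [[y' [y'0 y'pos y'M]]|[z' [z'0 z'M]]] := IH us J' M'.
  left.
  pose y k := \sum_c y' c * gen c k.
  have lin : forall q : J -> rat, \sum_k q k * y k = \sum_c y' c * \sum_k q k * gen c k.
    move=> q; rewrite /y.
    under eq_bigr do rewrite mulr_sumr.
    rewrite exchange_big; apply: eq_bigr => c _.
    rewrite mulr_sumr; apply: eq_bigr => k _; ring.
  exists y; split.
  - by move=> k; apply: sumr_ge0 => c _; apply: mulr_ge0.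
  - have -> : \sum_k y k = \sum_k (fun _ => 1) k * y k.
      by apply: eq_bigr => k _; rewrite mul1r.
    rewrite lin.
    have [c hc] : exists c, 0 < y' c.
      apply/existsP; apply: contraT; rewrite negb_exists => /forallP hall.
      have : \sum_c y' c = 0.
        apply: big1 => c _; have := hall c; have := y'0 c.
        rewrite -leNgt => h1 h2; apply/eqP; rewrite eq_le h1 h2.
        done.
      by move=> h; move: y'pos; rewrite h ltxx.
    rewrite (bigD1 c) //=.
    set S1 := (X in _ < X + _).
    have h1 : 0 < S1.
      rewrite /S1; apply: mulr_gt0 => //.
      have -> : \sum_k (fun _ => 1) k * gen c k = \sum_k gen c k.
        by apply: eq_bigr => k _; rewrite mul1r.
      exact: genpos.
    apply: (lt_le_trans h1); rewrite lerDl.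
    apply: sumr_ge0 => i _; apply: mulr_ge0 => //.
    by apply: sumr_ge0 => k _; rewrite mul1r.
  - move=> i; rewrite inE => /orP [/eqP -> | hi].
      rewrite (lin (M a)); apply: sumr_ge0 => c _; apply: mulr_ge0 => //.
      rewrite (genE (M a) c); case: c => [j|p].
        exact: (valP j).
      rewrite -/r; have -> : - r (val p).2 * r (val p).1 + r (val p).1 * r (val p).2 = 0 by ring.
      done.
    rewrite (lin (M i)).
    have := y'M i hi; rewrite /M'.
    by under eq_bigr do rewrite mulrC.
right.
pose sv k := \sum_(i <- s) z' i * M i k.
have svE : forall c, \sum_(i <- s) z' i * M' i c = \sum_k sv k * gen c k.
  move=> c; rewrite /M' /sv.
  under eq_bigr do rewrite mulr_sumr.
  rewrite exchange_big /=; apply: eq_bigr => k _.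
  rewrite mulr_suml; apply: eq_bigr => i _; ring.
have H1 : forall j, 0 <= r j -> sv j < 0.
  move=> j hj; have := z'M (inl (exist _ j hj)).
  by rewrite svE genE.
have H2 : forall i j, 0 < r i -> r j < 0 -> - r j * sv i + r i * sv j < 0.
  move=> i j hi hj.
  have hp : (0 < r (i, j).1) && (r (i, j).2 < 0) by rewrite hi hj.
  have := z'M (inr (exist _ (i, j) hp)).
  by rewrite svE genE.
have [t [t0 ht]] := @choose_t _ _ _ H1 H2.
exists (fun i => if i == a then t else z' i); split.
  by move=> i; case: (i == a).
move=> j; rewrite big_cons eqxx.
have -> : \sum_(i <- s) (if i == a then t else z' i) * M i j = sv j.
  rewrite /sv big_seq_cond [RHS]big_seq_cond; apply: eq_bigr => i /andP [hi _].
  case: eqP => // eia; move: hi; rewrite eia => hi.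
  by move: anots; rewrite hi.
exact: ht.
Qed.

Lemma part (n : nat) (T U : finType) (m : n.-tuple T -> n.-tuple U)
  (F : n.-tuple T -> rat) (G : n.-tuple U -> rat) :
  \sum_y F y * G (m y) = \sum_x G x * \sum_(y | m y == x) F y.
Proof.
rewrite (partition_big m predT) //; apply: eq_bigr => x _.
rewrite mulr_sumr; apply: eq_bigr => y; rewrite andTb => /eqP <-.
by rewrite mulrC.
Qed.

Lemma val_pw (s : signature) (A B C : structure s) (g : {ffun dom A -> dom B})
  (h : {ffun dom B -> dom C}) :
  Defs.val [ffun a => h (g a)] =
  \sum_f \sum_x interp C f (map_tuple h x) * preim_weight g x.
Proof.
rewrite /Defs.val; apply: eq_bigr => f _.
have := @part _ _ _ (map_tuple g) (fun y => interp A f y) (fun x => interp C f (map_tuple h x)).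
move=> /= <-; apply: eq_bigr => y _.
congr (_ * interp C f _).
by apply: eq_from_tnth => i; rewrite !tnth_map ffunE.
Qed.

Lemma val_ge0 (s : signature) (A C : structure s) (h : {ffun dom A -> dom C}) :
  0 <= Defs.val h.
Proof.
by apply: sumr_ge0 => f _; apply: sumr_ge0 => x _; apply: mulr_ge0; apply: interp_ge0.
Qed.

Lemma val_le_opt (s : signature) (A C : structure s) (h : {ffun dom A -> dom C}) :
  Defs.val h <= opt A C.
Proof. by rewrite /opt (bigD1 h) //= le_max lexx. Qed.

Lemma opt_ge0 (s : signature) (A C : structure s) : 0 <= opt A C.
Proof. rewrite /opt; elim/big_rec: _ => // h x _ hx; by rewrite le_max hx orbT. Qed.

Lemma backward (s : signature) (A B : structure s) (w : {ffun {ffun dom A -> dom B} -> rat}) : overcast w -> succeq A B.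
Proof.
case=> w0 w1 wB C.
rewrite {1}/opt; apply: (big_ind (fun x => x <= opt A C)).
- exact: opt_ge0.
- by move=> x y hx hy; rewrite ge_max hx hy.
move=> h _.
apply: (@le_trans _ _ (\sum_g w g * Defs.val [ffun a => h (g a)])); last first.
  apply: (@le_trans _ _ (\sum_g w g * opt A C)).
    by apply: ler_sum => g _; apply: ler_wpM2l => //; apply: val_le_opt.
  by rewrite -mulr_suml w1 mul1r.
under eq_bigr do rewrite val_pw mulr_sumr.
rewrite exchange_big; apply: ler_sum => f _.
under eq_bigr do rewrite mulr_sumr.
rewrite exchange_big; apply: ler_sum => x _.
have -> : \sum_g w g * (interp C f (map_tuple h x) * preim_weight g x) =
   interp C f (map_tuple h x) * \sum_g w g * preim_weight g x.
  by rewrite mulr_sumr; apply: eq_bigr => g _; ring.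
by rewrite mulrC; apply: ler_wpM2l; [apply: interp_ge0 | apply: wB].
Qed.

Lemma forward (s : signature) (A B : structure s) :
  succeq A B -> exists w : {ffun {ffun dom A -> dom B} -> rat}, overcast w.
Proof.
move=> hsucc.
pose K : finType := {f : sym s & (ar f).-tuple (dom B)}.
pose M (k : K) (g : {ffun dom A -> dom B}) :=
  preim_weight g (tagged k) - interp B (tag k) (tagged k).
have sum_sig : forall F : forall f : sym s, (ar f).-tuple (dom B) -> rat,
    \sum_f \sum_x F f x = \sum_(k : K) F (tag k) (tagged k).
  by move=> F; exact: (sig_big_dep xpredT (fun _ => xpredT) F).
have [[y [y0 ypos yM]]|[z [z0 zM]]] := @ville K _ (enum_uniq K) _ M.
  exists [ffun g => y g / \sum_g y g]; split.
  - by move=> g; rewrite ffunE divr_ge0 // ltW.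
  - under eq_bigr do rewrite ffunE.
    by rewrite -mulr_suml divff // (negbT (gt_eqF ypos)).
  move=> f x.
  have := yM (Tagged (fun f => (ar f).-tuple (dom B)) x); rewrite mem_enum => /(_ isT).
  rewrite /M /=.
  under eq_bigr do rewrite mulrBl.
  rewrite sumrB -mulr_sumr.
  have -> : \sum_g [ffun g => y g / \sum_g0 y g0] g * preim_weight g x =
      (\sum_g y g * preim_weight g x) / \sum_g y g.
    rewrite mulr_suml; apply: eq_bigr => g _; rewrite ffunE; ring.
  rewrite ler_pdivlMr //.
  have -> : \sum_g preim_weight g x * y g = \sum_g y g * preim_weight g x.
    by apply: eq_bigr => g _; rewrite mulrC.
  lra.
exfalso.
pose C := @Structure s (dom B) (dom_nonempty _ B)
  (fun f x => z (Tagged (fun f => (ar f).-tuple (dom B)) x)) (fun f x => z0 _).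
pose idB : {ffun dom B -> dom C} := [ffun b => b].
have validB : Defs.val idB = \sum_(k : K) z k * interp B (tag k) (tagged k).
  rewrite /Defs.val.
  rewrite (eq_bigr (fun k : K => (fun f x => z (Tagged (fun f => (ar f).-tuple (dom B)) x) * interp B f x) (tag k) (tagged k))); last by move=> [f x].
  rewrite -(sum_sig (fun f x => z (Tagged (fun f => (ar f).-tuple (dom B)) x) * interp B f x)); apply: eq_bigr => f _; apply: eq_bigr => x _.
  have -> : map_tuple idB x = x.
    by apply: eq_from_tnth => i; rewrite tnth_map ffunE.
  by rewrite mulrC.
have valA : forall g : {ffun dom A -> dom C},
    Defs.val g = \sum_(k : K) z k * preim_weight (g : {ffun dom A -> dom B}) (tagged k).
  move=> g; rewrite /Defs.val.
  rewrite (eq_bigr (fun k : K => (fun f x => z (Tagged (fun f => (ar f).-tuple (dom B)) x) * preim_weight (g : {ffun dom A -> dom B}) x) (tag k) (tagged k))); last by move=> [f x].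
  rewrite -(sum_sig (fun f x => z (Tagged (fun f => (ar f).-tuple (dom B)) x) * preim_weight (g : {ffun dom A -> dom B}) x)); apply: eq_bigr => f _.
  have := @part _ _ _ (map_tuple g) (fun y => interp A f y)
     (fun x => interp C f x).
  move=> /= ->; apply: eq_bigr => x _; done.
have lt : forall g : {ffun dom A -> dom C}, Defs.val g < Defs.val idB.
  move=> g; have := zM g.
  rewrite big_enum /= /M.
  under eq_bigr do rewrite mulrBr.
  rewrite sumrB -validB -valA; lra.
have [b0 _] := card_gt0P (dom_nonempty _ B).
have pos : 0 < Defs.val idB.
  exact: (le_lt_trans (val_ge0 _ _ _ [ffun _ => b0 : dom C]) (lt [ffun _ => b0 : dom C])).
have : opt A C < opt B C.
  apply: (lt_le_trans _ (val_le_opt _ _ _ idB)).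
  rewrite /opt; apply: (big_ind (fun x => x < Defs.val idB)) => //.
  all: try by move=> a b ha hb; rewrite gt_max ha hb.
  all: try by move=> g _; apply: lt.
by rewrite ltNge hsucc.
Qed.

Theorem proposition9 (s : signature) (A B : structure s) :
  succeq A B <-> exists w : {ffun {ffun dom A -> dom B} -> rat}, overcast w.
Proof.
split; first exact: forward.
by case=> w hw; exact: (backward _ _ _ _ hw).
Qed.
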